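(* (Preservation.) For every typing context $\Gamma$, expressions $e, e'$, type $\tau$ and natural number $n$: if $\Gamma \vdash e : \tau$ and $e \Rightarrow^{n} e'$, then $\Gamma \vdash e' : \tau$.
   Context: This concerns the ''filtered stepper calculus''. Syntax: actions $a ::= \mathsf{skip} \mid \mathsf{step}$; gas $g ::= \mathsf{one} \mid \mathsf{all}$; priorities $l \in \mathbb{N}$. Patterns $p ::= x \mid p(p) \mid \lambda x.p \mid p+p \mid \underline{n} \mid \$e \mid \$v$ (the pattern typing rules also admit $\mathrm{fix}\,x.p$). A filter is a triple $f=(p,a,g)$. Expressions $e ::= x \mid e(e) \mid \lambda x.e \mid \mathrm{fix}\,x.e \mid e+e \mid \underline{n} \mid \mathrm{filter}_f(e) \mid \langle e\rangle^{a,g,l}$ (the last is called a residue), taken up to $\alpha$-equivalence; $\underline{n}$ ranges over numerals. Evaluation contexts $\mathcal{E} ::= \circ \mid \mathcal{E}(e) \mid e(\mathcal{E}) \mid \mathcal{E}+e \mid e+\mathcal{E} \mid \mathrm{filter}_f(\mathcal{E}) \mid \langle \mathcal{E}\rangle^{a,g,l}$, with exactly one hole; $\mathcal{E}[e]$ is the result of plugging $e$ into the hole. The values are exactly $\lambda x.e$ and numerals $\underline{n}$ (fixpoints, filters and residues are never values). Substitution $[v/x]e$ is standard capture-avoiding substitution, which passes through residues unchanged, through filters (substituting also into the filter's pattern), and stops at binders $\lambda x$ and $\mathrm{fix}\,x$ of the same variable. Stripping $|e|$ erases all filter and residue wrappers recursively. Matching $p \triangleright e$ is defined inductively: $\$e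 \triangleright e$ for all $e$; $\$v \triangleright v$ for every value $v$; $\underline{n}\triangleright\underline{n}$; $\lambda x_1.e_1 \triangleright \lambda x_2.e_2$ if $|e_1| \equiv_\alpha |e_2|$; $\mathrm{fix}\,x_1.e_1 \triangleright \mathrm{fix}\,x_2.e_2$ if $|e_1|\equiv_\alpha |e_2|$; $p_1(p_2)\triangleright e_1(e_2)$ if $p_1\triangleright e_1$ and $p_2\triangleright e_2$; $p_1+p_2\triangleright e_1+e_2$ likewise; there are no other rules. Instrumentation $e \to_{p,a,g,l} e'$ is the inductively defined relation: values and variables and $\mathrm{fix}\,x.e$ are left unchanged; $\langle e_0\rangle^{a',g',l'} \to_{p,a,g,l} \langle e\rangle^{a',g',l'}$ if $e_0\to_{p,a,g,l} e$; $\mathrm{filter}_{(p',a',g')}(e_0)\to_{p,a,g,l}\mathrm{filter}_{(p',a',g')}(e')$ if $e_0\to_{p,a,g,l} e$ and $e \to_{p',a',g',l+1} e'$; for $e_1(e_2)$, if $e_1\to_{p,a,g,l} e_1'$ and $e_2\to_{p,a,g,l} e_2'$ then $e_1(e_2)\to_{p,a,g,l}\langle e_1'(e_2')\rangle^{a,g,l}$ when $p\triangleright e_1(e_2)$ and $e_1(e_2)\to_{p,a,g,l} e_1'(e_2')$ when not; identically for $e_1+e_2$. Decomposition $e = \mathcal{E}[e_0]$ (with $e_0$ a redex) is the non-deterministic relation: $\langle v\rangle^{a,g,l}$ and $\mathrm{filter}_f(v)$ with $v$ a value decompose as hole $\circ$ with redex themselves; if $e$ decomposes as $\mathcal{E}$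 and $e_0$ then $\langle e\rangle^{a,g,l}$ decomposes as $\langle\mathcal{E}\rangle^{a,g,l}$ and $e_0$, and $\mathrm{filter}_f(e)$ as $\mathrm{filter}_f(\mathcal{E})$ and $e_0$; $e_1(e_2)$ decomposes as $\mathcal{E}_1(e_2)$ if $e_1$ decomposes as $\mathcal{E}_1$, as $e_1(\mathcal{E}_2)$ if $e_1$ is a value and $e_2$ decomposes as $\mathcal{E}_2$, and as $\circ$ with redex $e_1(e_2)$ if both are values; identically for $e_1+e_2$; $\mathrm{fix}\,x.e$ decomposes as $\circ$ with redex itself. Instruction transitions $e_0 \to e'$: $(\lambda x.e_1)(v)\to [v/x]e_1$ for a value $v$; $\underline{n_1}+\underline{n_2}\to\underline{n_1+n_2}$; $\mathrm{fix}\,x.e\to[\mathrm{fix}\,x.e/x]e$; $\langle v\rangle^{a,g,l}\to v$ and $\mathrm{filter}_f(v)\to v$ for a value $v$. Decay ${\downarrow}\mathcal{E}$ recursively removes every residue with gas $\mathsf{one}$ (replacing $\langle e\rangle^{a,\mathsf{one},l}$ by the decay of $e$), keeps residues with gas $\mathsf{all}$ and filters, applies recursively to all subterms, and maps the hole to the hole. Action selection $(a,l)\vdash\mathcal{E}\Downarrow a'$: $(a,l)\vdash\circ\Downarrow a$; for context nodes of the form application, addition or filter, the judgment passes unchanged into the subcontext containing the hole; $(a_0,l_0)\vdash\langle\mathcal{E}\rangle^{a,g,l}\Downarrow a'$ holds if either $l\le l_0$ and $(a_0,l_0)\vdash\mathcal{E}\Downarrow a'$, or $l>l_0$ and $(a,l)\vdash\mathcal{E}\Downarrow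 a'$. An expression is strippable if it has the form $\mathrm{filter}_f(e)$ or $\langle e\rangle^{a,g,l}$. Filtered stepping $e\Rightarrow^n e'$ is defined inductively: (i) $v\Rightarrow^0 v$ for every value $v$; (ii) if $e\to_{\$e,\mathsf{step},\mathsf{one},0} e_i$, $e_i=\mathcal{E}_0[e_0]$ (decomposition), $e_0\to e_t$, $e_1=({\downarrow}\mathcal{E}_0)[e_t]$, $(\mathsf{step},0)\vdash\mathcal{E}_0\Downarrow\mathsf{step}$ and $e_0$ is not strippable, then $e\Rightarrow^1 e_1$; (iii) with $e_i,\mathcal{E}_0,e_0,e_t,e_1$ as in (ii), if $(\mathsf{step},0)\vdash\mathcal{E}_0\Downarrow\mathsf{skip}$ and $e_1\Rightarrow^n e_2$, then $e\Rightarrow^{n+1}e_2$; (iv) with the same data, if $e_0$ is strippable and $e_1\Rightarrow^n e_2$, then $e\Rightarrow^{n+1}e_2$. Typing: types $\tau ::= \mathbb{N}\mid \tau\to\tau$. $\Gamma\vdash e:\tau$ is given by the usual Curry-style simply-typed rules: variables from $\Gamma$; $\lambda x.e : \tau_x\to\tau_e$ if $\Gamma,x{:}\tau_x\vdash e:\tau_e$; application; numerals have type $\mathbb{N}$; $e_1+e_2:\mathbb{N}$ if both summands have type $\mathbb{N}$; $\mathrm{fix}\,x.e:\tau$ if $\Gamma,x{:}\tau\vdash e:\tau$; $\mathrm{filter}_{(p,a,g)}(e):\tau_e$ if $\Gamma\vdash p:\tau_p$ for some $\tau_p$ and $\Gamma\vdash e:\tau_e$; $\langle e\rangle^{a,g,l}:\tau$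 if $\Gamma\vdash e:\tau$. Pattern typing $\Gamma\vdash p:\tau$: $\$e$ and $\$v$ have every type; variables, $\lambda$, application, numerals, addition and $\mathrm{fix}$ are typed by the analogous rules. *)

(* Defs.v *)
(* Filtered stepper calculus, locally nameless-free de Bruijn
   representation (alpha-equivalence = syntactic equality). *)
From Stdlib Require Import Arith List.
Import ListNotations.

Inductive action := Skip | Step.
Inductive gas := One | All.

(* Patterns: variables are de Bruijn indices; PLam / PFix bind index 0. *)
Inductive pat : Type :=
| PVar  : nat -> pat
| PApp  : pat -> pat -> pat
| PLam  : pat -> pat
| PPlus : pat -> pat -> pat
| PNum  : nat -> pat
| PAnyE : pat
| PAnyV : pat
| PFix  : pat -> pat.

(* Expressions; Filter p a g e is filter_(p,a,g)(e), Resid e a g l is <e>^{a,g,l}. *)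
Inductive expr : Type :=
| Var    : nat -> expr
| App    : expr -> expr -> expr
| Lam    : expr -> expr
| Fix    : expr -> expr
| Plus   : expr -> expr -> expr
| Num    : nat -> expr
| Filter : pat -> action -> gas -> expr -> expr
| Resid  : expr -> action -> gas -> nat -> expr.

Definition is_value (e : expr) : Prop :=
  match e with Lam _ | Num _ => True | _ => False end.

Fixpoint strip (e : expr) : expr :=
  match e with
  | Var n => Var n
  | App e1 e2 => App (strip e1) (strip e2)
  | Lam e => Lam (strip e)
  | Fix e => Fix (strip e)
  | Plus e1 e2 => Plus (strip e1) (strip e2)
  | Num n => Num n
  | Filter _ _ _ e => strip e
  | Resid e _ _ _ => strip e
  end.

Fixpoint pat_of_expr (e : expr) : pat :=
  match e with
  | Var n => PVar n
  | App e1 e2 => PApp (pat_of_expr e1) (pat_of_expr e2)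
  | Lam e => PLam (pat_of_expr e)
  | Fix e => PFix (pat_of_expr e)
  | Plus e1 e2 => PPlus (pat_of_expr e1) (pat_of_expr e2)
  | Num n => PNum n
  | Filter _ _ _ e => pat_of_expr e
  | Resid e _ _ _ => pat_of_expr e
  end.

Fixpoint plift (c : nat) (p : pat) : pat :=
  match p with
  | PVar n => if c <=? n then PVar (S n) else PVar n
  | PApp p1 p2 => PApp (plift c p1) (plift c p2)
  | PLam p => PLam (plift (S c) p)
  | PPlus p1 p2 => PPlus (plift c p1) (plift c p2)
  | PNum n => PNum n
  | PAnyE => PAnyE
  | PAnyV => PAnyV
  | PFix p => PFix (plift (S c) p)
  end.

Fixpoint lift (c : nat) (e : expr) : expr :=
  match e with
  | Var n => if c <=? n then Var (S n) else Var n
  | App e1 e2 => App (lift c e1) (lift c e2)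
  | Lam e => Lam (lift (S c) e)
  | Fix e => Fix (lift (S c) e)
  | Plus e1 e2 => Plus (lift c e1) (lift c e2)
  | Num n => Num n
  | Filter p a g e => Filter (plift c p) a g (lift c e)
  | Resid e a g l => Resid (lift c e) a g l
  end.

Fixpoint psubst (k : nat) (s : expr) (p : pat) : pat :=
  match p with
  | PVar n => if n =? k then pat_of_expr s
              else if k <? n then PVar (pred n) else PVar n
  | PApp p1 p2 => PApp (psubst k s p1) (psubst k s p2)
  | PLam p => PLam (psubst (S k) (lift 0 s) p)
  | PPlus p1 p2 => PPlus (psubst k s p1) (psubst k s p2)
  | PNum n => PNum n
  | PAnyE => PAnyE
  | PAnyV => PAnyV
  | PFix p => PFix (psubst (S k) (lift 0 s) p)
  end.

Fixpoint subst (k : nat) (s : expr) (e : expr) : expr :=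
  match e with
  | Var n => if n =? k then s
             else if k <? n then Var (pred n) else Var n
  | App e1 e2 => App (subst k s e1) (subst k s e2)
  | Lam e => Lam (subst (S k) (lift 0 s) e)
  | Fix e => Fix (subst (S k) (lift 0 s) e)
  | Plus e1 e2 => Plus (subst k s e1) (subst k s e2)
  | Num n => Num n
  | Filter p a g e => Filter (psubst k s p) a g (subst k s e)
  | Resid e a g l => Resid (subst k s e) a g l
  end.

Inductive matches : pat -> expr -> Prop :=
| M_anyE : forall e, matches PAnyE e
| M_anyV : forall v, is_value v -> matches PAnyV v
| M_num  : forall n, matches (PNum n) (Num n)
| M_lam  : forall p e, p = pat_of_expr (strip e) -> matches (PLam p) (Lam e)
| M_fix  : forall p e, p = pat_of_expr (strip e) -> matches (PFix p) (Fix e)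
| M_app  : forall p1 p2 e1 e2, matches p1 e1 -> matches p2 e2 ->
           matches (PApp p1 p2) (App e1 e2)
| M_plus : forall p1 p2 e1 e2, matches p1 e1 -> matches p2 e2 ->
           matches (PPlus p1 p2) (Plus e1 e2).

Inductive instr : pat -> action -> gas -> nat -> expr -> expr -> Prop :=
| I_val : forall p a g l v, is_value v -> instr p a g l v v
| I_var : forall p a g l n, instr p a g l (Var n) (Var n)
| I_fix : forall p a g l e, instr p a g l (Fix e) (Fix e)
| I_resid : forall p a g l e0 e a' g' l',
    instr p a g l e0 e -> instr p a g l (Resid e0 a' g' l') (Resid e a' g' l')
| I_filter : forall p a g l e0 e e' p' a' g',
    instr p a g l e0 e -> instr p' a' g' (S l) e e' ->
    instr p a g l (Filter p' a' g' e0) (Filter p' a' g' e')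
| I_app_m : forall p a g l e1 e2 e1' e2',
    instr p a g l e1 e1' -> instr p a g l e2 e2' -> matches p (App e1 e2) ->
    instr p a g l (App e1 e2) (Resid (App e1' e2') a g l)
| I_app_n : forall p a g l e1 e2 e1' e2',
    instr p a g l e1 e1' -> instr p a g l e2 e2' -> ~ matches p (App e1 e2) ->
    instr p a g l (App e1 e2) (App e1' e2')
| I_plus_m : forall p a g l e1 e2 e1' e2',
    instr p a g l e1 e1' -> instr p a g l e2 e2' -> matches p (Plus e1 e2) ->
    instr p a g l (Plus e1 e2) (Resid (Plus e1' e2') a g l)
| I_plus_n : forall p a g l e1 e2 e1' e2',
    instr p a g l e1 e1' -> instr p a g l e2 e2' -> ~ matches p (Plus e1 e2) ->
    instr p a g l (Plus e1 e2) (Plus e1' e2').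

Inductive ctx : Type :=
| Hole   : ctx
| CAppL  : ctx -> expr -> ctx
| CAppR  : expr -> ctx -> ctx
| CPlusL : ctx -> expr -> ctx
| CPlusR : expr -> ctx -> ctx
| CFilter : pat -> action -> gas -> ctx -> ctx
| CResid : ctx -> action -> gas -> nat -> ctx.

Fixpoint plug (E : ctx) (e : expr) : expr :=
  match E with
  | Hole => e
  | CAppL E e2 => App (plug E e) e2
  | CAppR e1 E => App e1 (plug E e)
  | CPlusL E e2 => Plus (plug E e) e2
  | CPlusR e1 E => Plus e1 (plug E e)
  | CFilter p a g E => Filter p a g (plug E e)
  | CResid E a g l => Resid (plug E e) a g l
  end.

Inductive decomp : expr -> ctx -> expr -> Prop :=
| D_resid_v : forall v a g l, is_value v -> decomp (Resid v a g l) Hole (Resid v a g l)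
| D_filter_v : forall p a g v, is_value v -> decomp (Filter p a g v) Hole (Filter p a g v)
| D_resid : forall e E e0 a g l, decomp e E e0 -> decomp (Resid e a g l) (CResid E a g l) e0
| D_filter : forall p a g e E e0, decomp e E e0 -> decomp (Filter p a g e) (CFilter p a g E) e0
| D_appL : forall e1 e2 E e0, decomp e1 E e0 -> decomp (App e1 e2) (CAppL E e2) e0
| D_appR : forall e1 e2 E e0, is_value e1 -> decomp e2 E e0 -> decomp (App e1 e2) (CAppR e1 E) e0
| D_app : forall e1 e2, is_value e1 -> is_value e2 -> decomp (App e1 e2) Hole (App e1 e2)
| D_plusL : forall e1 e2 E e0, decomp e1 E e0 -> decomp (Plus e1 e2) (CPlusL E e2) e0
| D_plusR : forall e1 e2 E e0, is_value e1 -> decomp e2 E e0 -> decomp (Plus e1 e2) (CPlusR e1 E) e0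
| D_plus : forall e1 e2, is_value e1 -> is_value e2 -> decomp (Plus e1 e2) Hole (Plus e1 e2)
| D_fix : forall e, decomp (Fix e) Hole (Fix e).

Inductive istep : expr -> expr -> Prop :=
| S_beta : forall e v, is_value v -> istep (App (Lam e) v) (subst 0 v e)
| S_plus : forall n1 n2, istep (Plus (Num n1) (Num n2)) (Num (n1 + n2))
| S_fix : forall e, istep (Fix e) (subst 0 (Fix e) e)
| S_resid : forall v a g l, is_value v -> istep (Resid v a g l) v
| S_filter : forall p a g v, is_value v -> istep (Filter p a g v) v.

Fixpoint decay_e (e : expr) : expr :=
  match e with
  | Var n => Var n
  | App e1 e2 => App (decay_e e1) (decay_e e2)
  | Lam e => Lam (decay_e e)
  | Fix e => Fix (decay_e e)
  | Plus e1 e2 => Plus (decay_e e1) (decay_e e2)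
  | Num n => Num n
  | Filter p a g e => Filter p a g (decay_e e)
  | Resid e a One l => decay_e e
  | Resid e a All l => Resid (decay_e e) a All l
  end.

Fixpoint decay (E : ctx) : ctx :=
  match E with
  | Hole => Hole
  | CAppL E e2 => CAppL (decay E) (decay_e e2)
  | CAppR e1 E => CAppR (decay_e e1) (decay E)
  | CPlusL E e2 => CPlusL (decay E) (decay_e e2)
  | CPlusR e1 E => CPlusR (decay_e e1) (decay E)
  | CFilter p a g E => CFilter p a g (decay E)
  | CResid E a One l => decay E
  | CResid E a All l => CResid (decay E) a All l
  end.

Inductive select : action -> nat -> ctx -> action -> Prop :=
| Sel_hole : forall a l, select a l Hole a
| Sel_appL : forall a l E e a', select a l E a' -> select a l (CAppL E e) a'
| Sel_appR : forall a l E e a', select a l E a' -> select a l (CAppR e E) a'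
| Sel_plusL : forall a l E e a', select a l E a' -> select a l (CPlusL E e) a'
| Sel_plusR : forall a l E e a', select a l E a' -> select a l (CPlusR e E) a'
| Sel_filter : forall a l p af gf E a', select a l E a' -> select a l (CFilter p af gf E) a'
| Sel_resid_le : forall a0 l0 E a g l a', l <= l0 -> select a0 l0 E a' ->
    select a0 l0 (CResid E a g l) a'
| Sel_resid_gt : forall a0 l0 E a g l a', l > l0 -> select a l E a' ->
    select a0 l0 (CResid E a g l) a'.

Definition strippable (e : expr) : Prop :=
  match e with Filter _ _ _ _ | Resid _ _ _ _ => True | _ => False end.

Inductive fstep : expr -> nat -> expr -> Prop :=
| FS_val : forall v, is_value v -> fstep v 0 v
| FS_step : forall e ei E0 e0 et,
    instr PAnyE Step One 0 e ei -> decomp ei E0 e0 -> istep e0 et ->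
    select Step 0 E0 Step -> ~ strippable e0 ->
    fstep e 1 (plug (decay E0) et)
| FS_skip : forall e ei E0 e0 et n e2,
    instr PAnyE Step One 0 e ei -> decomp ei E0 e0 -> istep e0 et ->
    select Step 0 E0 Skip -> fstep (plug (decay E0) et) n e2 ->
    fstep e (S n) e2
| FS_strip : forall e ei E0 e0 et n e2,
    instr PAnyE Step One 0 e ei -> decomp ei E0 e0 -> istep e0 et ->
    strippable e0 -> fstep (plug (decay E0) et) n e2 ->
    fstep e (S n) e2.

(* types and typing (contexts are lists indexed by de Bruijn indices) *)
Inductive ty : Type := TNat | TArr : ty -> ty -> ty.

Inductive pat_type : list ty -> pat -> ty -> Prop :=
| PT_anyE : forall G t, pat_type G PAnyE t
| PT_anyV : forall G t, pat_type G PAnyV t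
| PT_var : forall G n t, nth_error G n = Some t -> pat_type G (PVar n) t
| PT_lam : forall G p tx te, pat_type (tx :: G) p te -> pat_type G (PLam p) (TArr tx te)
| PT_app : forall G p1 p2 t1 t2, pat_type G p1 (TArr t1 t2) -> pat_type G p2 t1 ->
    pat_type G (PApp p1 p2) t2
| PT_num : forall G n, pat_type G (PNum n) TNat
| PT_plus : forall G p1 p2, pat_type G p1 TNat -> pat_type G p2 TNat ->
    pat_type G (PPlus p1 p2) TNat
| PT_fix : forall G p t, pat_type (t :: G) p t -> pat_type G (PFix p) t.

Inductive has_type : list ty -> expr -> ty -> Prop :=
| T_var : forall G n t, nth_error G n = Some t -> has_type G (Var n) t
| T_lam : forall G e tx te, has_type (tx :: G) e te -> has_type G (Lam e) (TArr tx te)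
| T_app : forall G e1 e2 t1 t2, has_type G e1 (TArr t1 t2) -> has_type G e2 t1 ->
    has_type G (App e1 e2) t2
| T_num : forall G n, has_type G (Num n) TNat
| T_plus : forall G e1 e2, has_type G e1 TNat -> has_type G e2 TNat ->
    has_type G (Plus e1 e2) TNat
| T_fix : forall G e t, has_type (t :: G) e t -> has_type G (Fix e) t
| T_filter : forall G p a g e tp te, pat_type G p tp -> has_type G e te ->
    has_type G (Filter p a g e) te
| T_resid : forall G e a g l t, has_type G e t -> has_type G (Resid e a g l) t.

(* Main.v *)
Require Import Defs.
From Stdlib Require Import List Arith Lia.
Import ListNotations.

Lemma nth_lift_ge : forall (D G : list ty) x n, length D <= n ->
  nth_error (D ++ x :: G) (S n) = nth_error (D ++ G) n.
Proof.
  intros. rewrite !nth_error_app2 by lia.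
  replace (S n - length D) with (S (n - length D)) by lia. reflexivity.
Qed.

Lemma pat_weak : forall G0 p t, pat_type G0 p t ->
  forall D G x, G0 = D ++ G -> pat_type (D ++ x :: G) (plift (length D) p) t.
Proof.
  induction 1; intros D G1 x E; subst; simpl; try (econstructor; eauto; fail).
  - destruct (Nat.leb_spec (length D) n).
    + constructor. rewrite nth_lift_ge by lia. auto.
    + constructor. rewrite nth_error_app1 in * by lia. auto.
  - constructor. apply (IHpat_type (tx :: D) G1 x); reflexivity.
  - constructor. apply (IHpat_type (t :: D) G1 x); reflexivity.
Qed.

Lemma ty_weak : forall G0 e t, has_type G0 e t ->
  forall D G x, G0 = D ++ G -> has_type (D ++ x :: G) (lift (length D) e) t.
Proof.
  induction 1; intros D G1 x E; subst; simpl; try (econstructor; eauto; fail).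
  - destruct (Nat.leb_spec (length D) n).
    + constructor. rewrite nth_lift_ge by lia. auto.
    + constructor. rewrite nth_error_app1 in * by lia. auto.
  - constructor. apply (IHhas_type (tx :: D) G1 x); reflexivity.
  - constructor. apply (IHhas_type (t :: D) G1 x); reflexivity.
  - econstructor; eauto. eapply pat_weak; eauto.
Qed.

Lemma ty_weak0 : forall G e t x, has_type G e t -> has_type (x :: G) (lift 0 e) t.
Proof. intros. apply (ty_weak G e t H [] G x); reflexivity. Qed.

Lemma pat_of_expr_ty : forall G e t, has_type G e t -> pat_type G (pat_of_expr e) t.
Proof. induction 1; simpl; auto; [apply PT_var|apply PT_lam|eapply PT_app|apply PT_num|apply PT_plus|apply PT_fix]; eauto. Qed.

Lemma var_subst_cases : forall (D G : list ty) u n t,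
  nth_error (D ++ u :: G) n = Some t ->
  (n = length D /\ t = u) \/
  (n <> length D /\ nth_error (D ++ G) (if length D <? n then pred n else n) = Some t).
Proof.
  intros. destruct (Nat.lt_trichotomy n (length D)) as [Hl|[He|Hg]].
  - right. split; [lia|]. replace (length D <? n) with false by (symmetry; apply Nat.ltb_ge; lia).
    rewrite nth_error_app1 in * by lia. auto.
  - left. split; auto. subst. rewrite nth_error_app2 in H by lia.
    rewrite Nat.sub_diag in H. simpl in H. congruence.
  - right. split; [lia|]. replace (length D <? n) with true by (symmetry; apply Nat.ltb_lt; lia).
    destruct n; [lia|]. simpl.
    rewrite nth_error_app2 in * by lia.
    replace (S n - length D) with (S (n - length D)) in H by lia. simpl in H. exact H.
Qed.

Lemma pat_subst : forall G0 p t, pat_type G0 p t ->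
  forall D G u s, G0 = D ++ u :: G -> has_type (D ++ G) s u ->
  pat_type (D ++ G) (psubst (length D) s p) t.
Proof.
  induction 1; intros D G1 u s E Hs; subst; simpl; try (econstructor; eauto; fail).
  - destruct (var_subst_cases D G1 u n t H) as [[-> ->]|[Hn Hnth]].
    + rewrite Nat.eqb_refl. apply pat_of_expr_ty; auto.
    + replace (n =? length D) with false by (symmetry; apply Nat.eqb_neq; auto).
      destruct (length D <? n); constructor; auto.
  - constructor. apply (IHpat_type (tx :: D) G1 u); auto. simpl. apply ty_weak0; auto.
  - constructor. apply (IHpat_type (t :: D) G1 u); auto. simpl. apply ty_weak0; auto.
Qed.

Lemma ty_subst : forall G0 e t, has_type G0 e t ->
  forall D G u s, G0 = D ++ u :: G -> has_type (D ++ G) s u ->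
  has_type (D ++ G) (subst (length D) s e) t.
Proof.
  induction 1; intros D G1 u s E Hs; subst; simpl; try (econstructor; eauto; fail).
  - destruct (var_subst_cases D G1 u n t H) as [[-> ->]|[Hn Hnth]].
    + rewrite Nat.eqb_refl. auto.
    + replace (n =? length D) with false by (symmetry; apply Nat.eqb_neq; auto).
      destruct (length D <? n); constructor; auto.
  - constructor. apply (IHhas_type (tx :: D) G1 u); auto. simpl. apply ty_weak0; auto.
  - constructor. apply (IHhas_type (t :: D) G1 u); auto. simpl. apply ty_weak0; auto.
  - econstructor; eauto. eapply pat_subst; eauto.
Qed.

Lemma instr_ty : forall p a g l e ei, instr p a g l e ei ->
  forall G t, has_type G e t -> has_type G ei t.
Proof.
  induction 1; intros G0 t0 Ht; auto; inversion Ht; subst; econstructor; eauto.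
  econstructor; eauto.
  econstructor; eauto.
Qed.

Lemma decomp_plug : forall e E e0, decomp e E e0 -> e = plug E e0.
Proof. induction 1; simpl; congruence. Qed.

Lemma istep_ty : forall e et, istep e et -> forall G t, has_type G e t -> has_type G et t.
Proof.
  induction 1; intros G0 t0 Ht; inversion Ht; subst; auto.
  - match goal with H : has_type _ (Lam _) _ |- _ => inversion H; subst end.
    match goal with H : has_type (_ :: _) e _ |- _ => apply (ty_subst _ _ _ H [] G0 t1) end; auto.
  - constructor.
  - match goal with H : has_type (_ :: _) e _ |- _ => apply (ty_subst _ _ _ H [] G0 t0) end; auto.
Qed.

Lemma plug_ty : forall E G e0 t, has_type G (plug E e0) t ->
  exists t0, has_type G e0 t0 /\ forall e', has_type G e' t0 -> has_type G (plug E e') t.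
Proof.
  induction E; intros G0 e0 t0 Ht; simpl in *.
  - eauto.
  - inversion Ht; subst. destruct (IHE _ _ _ H2) as [t' [? ?]]. exists t'; split; eauto.
    intros; econstructor; eauto.
  - inversion Ht; subst. destruct (IHE _ _ _ H4) as [t' [? ?]]. exists t'; split; eauto.
    intros; econstructor; eauto.
  - inversion Ht; subst. destruct (IHE _ _ _ H2) as [t' [? ?]]. exists t'; split; eauto.
    intros; econstructor; eauto.
  - inversion Ht; subst. destruct (IHE _ _ _ H4) as [t' [? ?]]. exists t'; split; eauto.
    intros; econstructor; eauto.
  - inversion Ht; subst. destruct (IHE _ _ _ H6) as [t' [? ?]]. exists t'; split; eauto.
    intros; econstructor; eauto.
  - inversion Ht; subst. destruct (IHE _ _ _ H5) as [t' [? ?]]. exists t'; split; eauto.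
    intros; econstructor; eauto.
Qed.

Lemma decay_e_ty : forall G e t, has_type G e t -> has_type G (decay_e e) t.
Proof.
  induction 1; simpl; try (econstructor; eauto; fail).
  destruct g; auto. constructor; auto.
Qed.

Lemma decay_ty : forall E G e t, has_type G (plug E e) t -> has_type G (plug (decay E) e) t.
Proof.
  induction E; intros G0 e0 t0 Ht; simpl in *; auto; inversion Ht; subst;
    try (econstructor; eauto using decay_e_ty; fail).
  destruct g; simpl; auto. constructor; auto.
Qed.

Lemma step_ty : forall e ei E0 e0 et G t,
  instr PAnyE Step One 0 e ei -> decomp ei E0 e0 -> istep e0 et ->
  has_type G e t -> has_type G (plug (decay E0) et) t.
Proof.
  intros. apply decay_ty.
  pose proof (instr_ty _ _ _ _ _ _ H _ _ H2) as Hi.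
  rewrite (decomp_plug _ _ _ H0) in Hi.
  destruct (plug_ty _ _ _ _ Hi) as [t0 [Ha Hb]]. apply Hb. eapply istep_ty; eauto.
Qed.

Theorem theorem1 :
  forall (G : list ty) (e e' : expr) (t : ty) (n : nat),
    has_type G e t -> fstep e n e' -> has_type G e' t.
Proof.
  intros G e e' t n Ht Hf. revert t Ht.
  induction Hf; intros t Ht; eauto using step_ty.
Qed.
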